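(* Fix an execution path of naive-fvs$(G,k,\emptyset)$ that leads to a solution, with $V_-=\{x_1,\dots,x_s\}$, $F'$, $d^*$ and $\delta$ as defined in the context. For every $u\in F'$ and every $i\in\{1,\dots,s\}$, if $\delta(u,x_i)>0$ then $d^*(u)\ge d^*(x_i)$.
   Context: All graphs are finite, simple and undirected; $d_G(v)$ denotes the degree of $v$ in $G$ (taken to be $0$ if $v\notin V(G)$), $G-S$ denotes deletion of a vertex set $S$, and $G[S]$ the induced subgraph. A feedback vertex set of $G$ is a set $V_-\subseteq V(G)$ such that $G-V_-$ is a forest. Algorithm naive-fvs$(G,k,F)$ (with $k$ an integer and $F\subseteq V(G)$ inducing a forest) returns a set of vertices or ``NO'' as follows (all choices among several candidates are arbitrary; degrees are in the current graph $G$): (0) If $k<0$ return NO; if $V(G)=\emptyset$ return $\emptyset$. (1) If some vertex $v$ has degree less than $2$, return naive-fvs$(G-\{v\},k,F\setminus\{v\})$. (2) If some $v\in V(G)\setminus F$ has two neighbors in the same connected component of $G[F]$, let $X=$ naive-fvs$(G-\{v\},k-1,F)$ and return $X\cup\{v\}$ (NO if $X$ is NO). (3) Pick $v\in V(G)\setminus F$ of maximum degree. (4) If $d(v)=2$: set $X=\emptyset$; while $G$ contains a cycle $C$, take any vertex $x$ of $C$ not in $F$, add $x$ to $X$ and delete $x$ from $G$; then return $X$ if $|X|\le k$, else NO. (5) Let $X=$ naive-fvs$(G-\{v\},k-1,F)$; if $X$ is not NO, return $X\cup\{v\}$. (6) Return naive-fvs$(G,k,F\cup\{v\})$. An execution path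 is a sequence of calls $c_0,c_1,\dots,c_t$ where $c_0=$ naive-fvs$(G,k,\emptyset)$; for each $j<t$, $c_{j+1}$ is the recursive call made by $c_j$ in step 1 or step 2, or, if $c_j$ reaches step 5, either the call of step 5 or the call of step 6 (the latter considered even if the algorithm would not actually make it); and $c_t$ terminates in step 0 or step 4 without recursion. It leads to a solution if $c_t$ returns a set (not NO). Along the path, vertices are deleted from the current graph one at a time (in steps 1, 2, 5 and in the loop of step 4 of $c_t$). $V_-$ denotes the set of vertices deleted in step 2, in step 5 (when the path follows the step-5 call), and in the loop of step 4 of $c_t$; $F'$ denotes the set of vertices added to $F$ by step 6 (when the path follows the step-6 call). Let $x_1,\dots,x_s$ be the vertices of $V_-$ in the order they are deleted. For $v\in V_-\cup F'$, $d^*(v)$ is the degree of $v$ in the current graph at the moment $v$ is deleted (for $v\in V_-$) or moved into $F$ (for $v\in F'$). Let $G_i$ and $F_i$ be the current graph and current set $F$ immediately before $x_i$ is deleted, and let $G_{s+1}$ be the current graph at the end of the path. For $u\in F'$ and $1\le i\le s$, the number of effective decrements of $u$ incurred by $x_i$ is $\delta(u,x_i)=\max\{d_{G_i}(u),2\}-\max\{d_{G_{i+1}}(u),2\}$ if $u\in F_i$, and $\delta(u,x_i)=0$ otherwise. *)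

(* Defs.v *)
From HB Require Import structures.
From mathcomp Require Import all_boot all_order all_algebra.
Set Implicit Arguments. Unset Strict Implicit. Unset Printing Implicit Defensive.

(* A finite simple graph is given by a finite vertex type T and a symmetric
   irreflexive adjacency relation e.  The "current graph" of the algorithm is
   the induced subgraph G[V] for a vertex set V : {set T}. *)
Section FVS.
Variable T : finType.
Variable e : rel T.

Definition deg (V : {set T}) (v : T) : nat :=
  if v \in V then #|[set w in V | e v w]| else 0.

(* a and b are in the same connected component of G[V][F] = G[V ∩ F] *)
Definition connF (V F : {set T}) (a b : T) : bool :=
  connect [rel x y | [&& x \in V, x \in F, y \in V, y \in F & e x y]] a b.

Definition step2_cond (V F : {set T}) (v : T) : bool :=
  [&& v \in V, v \notin F &
      [exists a, exists b, [&& a != b, a \in V, b \in V, e v a, e v b,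
                               a \in F, b \in F & connF V F a b]]].

Definition on_cycle (V : {set T}) (x : T) : Prop :=
  exists c : seq T,
    [/\ x \in c, 3 <= size c, uniq c, all (fun y => y \in V) c & cycle e c].

Definition has_cycle (V : {set T}) : Prop := exists x, on_cycle V x.

Definition is_max (V F : {set T}) (v : T) : Prop :=
  v \in V :\: F /\ (forall w, w \in V :\: F -> deg V w <= deg V v).

Record state := St { sV : {set T}; sk : int; sF : {set T} }.

(* M1 : deletion in step 1;  M2 : deletion in step 2;  M5 : deletion in step 5
   (path follows the step-5 call);  M6 : v added to F in step 6 (path follows
   the step-6 call);  M4 : deletion in the loop of step 4 of the last call. *)
Inductive move := M1 of T | M2 of T | M5 of T | M6 of T | M4 of T.

Definition mv (m : move) : T :=
  match m with M1 v | M2 v | M5 v | M6 v | M4 v => v end.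

Definition is_loop (m : move) : bool := if m is M4 _ then true else false.

Definition is_vminus (m : move) : bool :=
  match m with M2 _ | M5 _ | M4 _ => true | _ => false end.

(* step (0) does not terminate, and step (1) does not apply *)
Definition pass01 (s : state) : Prop :=
  [/\ (0 <= sk s)%R, sV s != set0 & forall w, w \in sV s -> 2 <= deg (sV s) w].

Definition pass012 (s : state) : Prop :=
  pass01 s /\ forall w, ~~ step2_cond (sV s) (sF s) w.

Definition trans (s : state) (m : move) (s' : state) : Prop :=
  match m with
  | M1 v => [/\ (0 <= sk s)%R, sV s != set0, v \in sV s, deg (sV s) v < 2
              & s' = St (sV s :\ v) (sk s) (sF s :\ v)]
  | M2 v => [/\ pass01 s, step2_cond (sV s) (sF s) v
              & s' = St (sV s :\ v) (sk s - 1)%R (sF s)]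
  | M5 v => [/\ pass012 s, is_max (sV s) (sF s) v, deg (sV s) v != 2
              & s' = St (sV s :\ v) (sk s - 1)%R (sF s)]
  | M6 v => [/\ pass012 s, is_max (sV s) (sF s) v, deg (sV s) v != 2
              & s' = St (sV s) (sk s) (v |: sF s)]
  | M4 x => [/\ on_cycle (sV s) x, x \notin sF s
              & s' = St (sV s :\ x) (sk s) (sF s)]
  end.

(* each listed pair (s, m) records the state s in which move m is made;
   the state after the last move is sf *)
Fixpoint chain (tr : seq (state * move)) (sf : state) : Prop :=
  match tr with
  | [::] => True
  | (s, m) :: tr' => trans s m (head sf (map fst tr')) /\ chain tr' sf
  end.

Definition step4_entry (s : state) : Prop :=
  pass012 s /\ exists v, is_max (sV s) (sF s) v /\ deg (sV s) v = 2.

(* tr describes an execution path of naive-fvs(G,k,∅) (G = (T,e)) that leads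
   to a solution; sf is the current state at the end of the path. *)
Definition solution_path (k : int) (tr : seq (state * move)) (sf : state) : Prop :=
  let s0 := St [set: T] k set0 in
  [/\ head sf (map fst tr) = s0, chain tr sf &
      exists tr1 tr2, [/\ tr = tr1 ++ tr2, all (fun p => ~~ is_loop p.2) tr1,
                          all (fun p => is_loop p.2) tr2 &
        (* last call terminates in step 0 returning the empty set *)
        (tr2 = [::] /\ (0 <= sk sf)%R /\ sV sf = set0)
        \/
        (* last call terminates in step 4 returning X, |X| <= k *)
        (let sc := head sf (map fst tr2) in
         [/\ step4_entry sc, ~ has_cycle (sV sf) & ((size tr2)%:Z <= sk sc)%R])]].

(* the sequence of deletions of vertices of V_-, in order, with the state
   immediately before each deletion *)
Definition vminus_seq (tr : seq (state * move)) : seq (state * move) :=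
  [seq p <- tr | is_vminus p.2].

(* vertex set of G_{i+1}: D2 is the part of the V_- sequence after x_i *)
Definition next_graph (sf : state) (D2 : seq (state * move)) : {set T} :=
  head (sV sf) (map (fun p => sV p.1) D2).

(* effective decrements of u incurred by the deletion made in state s
   (G_i = G[sV s], F_i = sF s), Gnext being the vertex set of G_{i+1} *)
Definition delta (u : T) (s : state) (Gnext : {set T}) : nat :=
  if u \in sF s then maxn (deg (sV s) u) 2 - maxn (deg Gnext u) 2 else 0.

End FVS.

(* Main.v *)
Require Import Defs.
From HB Require Import structures.
From mathcomp Require Import all_boot all_order all_algebra.
Set Implicit Arguments. Unset Strict Implicit. Unset Printing Implicit Defensive.

Lemma chain_cat (T : finType) (e : rel T) A L sf :
  chain e (A ++ L) sf -> chain e L sf.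
Proof. elim: A => [|[p q] A IH] //= [_ H]; exact: IH. Qed.

Lemma step_inv (T : finType) (e : rel T) s m s' : trans e s m s' ->
  sV s' \subset sV s /\ forall x, x \in sF s -> x \in sV s' -> x \in sF s'.
Proof.
case: m => v /=.
- case=> _ _ _ _ ->; split=> /=; first exact: subD1set.
  by move=> x Hx; rewrite !in_setD1 => /andP[-> _].
- case=> _ _ ->; split=> //=; exact: subD1set.
- case=> _ _ _ ->; split=> //=; exact: subD1set.
- case=> _ _ _ ->; split=> //= x Hx _; by rewrite in_setU1 Hx orbT.
- case=> _ _ ->; split=> //=; exact: subD1set.
Qed.

Lemma chain_mono (T : finType) (e : rel T) s1 m1 C s2 m2 B sf :
  chain e ((s1, m1) :: C ++ (s2, m2) :: B) sf ->
  sV s2 \subset sV s1 /\ (forall x, x \in sF s1 -> x \in sV s2 -> x \in sF s2).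
Proof.
elim: C s1 m1 => [|[p q] C IH] s1 m1 /=.
  by case=> H _; exact: (step_inv H).
case=> H1 H2; have [S1 F1] := step_inv H1.
have [S2 F2] := IH _ _ H2.
split; first exact: subset_trans S2 S1.
move=> x Hx Hv; apply: (F2 _ _ Hv); apply: (F1 _ Hx); exact: (subsetP S2 _ Hv).
Qed.

Lemma split_cmp (X : Type) (t1 t2 A B : seq X) a b :
  t1 ++ a :: t2 = A ++ b :: B ->
  (a = b) \/ (exists C, t1 = A ++ b :: C) \/ (exists C, A = t1 ++ a :: C /\ t2 = C ++ b :: B).
Proof.
elim: t1 A => [|y t1 IH] [|z A] /=.
- by case=> ->; left.
- case=> <- H; right; right; exists A; by split.
- case=> -> _; right; left; by exists t1.
- case=> <- H; case: (IH _ H) => [->|[[C ->]|[C [-> ->]]]]; first by left.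
  + by right; left; exists C.
  + by right; right; exists C.
Qed.

Lemma filter_split (X : Type) (p : pred X) l D1 x D2 :
  filter p l = D1 ++ x :: D2 -> p x /\ exists A B, l = A ++ x :: B.
Proof.
elim: l D1 => [|y l IH] D1 /=; first by case: D1.
case py: (p y).
- case: D1 => [|d D1] /=.
    by case=> <- _; split=> //; exists [::], l.
  case=> _ H; have [Px [A [B ->]]] := IH _ H; split=> //; by exists (y :: A), B.
- move=> H; have [Px [A [B ->]]] := IH _ H; split=> //; by exists (y :: A), B.
Qed.

Lemma deg_mono (T : finType) (e : rel T) (V V' : {set T}) v :
  V' \subset V -> deg e V' v <= deg e V v.
Proof.
move=> S; rewrite /deg; case: ifP => // HV'; rewrite (subsetP S _ HV').
apply: subset_leq_card; apply/subsetP => w; rewrite !inE => /andP[H ->].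
by rewrite (subsetP S _ H).
Qed.

Lemma vminus_facts (T : finType) (e : rel T) s m s' :
  is_vminus m -> trans e s m s' -> mv m \in sV s /\ mv m \notin sF s.
Proof.
case: m => v //= _.
- by case=> _ /and3P[-> -> _].
- by case=> _ [] /setDP[-> ->].
- case=> [[c [Hc _ _ /allP Ha _]]] Hn _; split=> //; exact: Ha.
Qed.

Theorem mainTheorem4 (T : finType) (e : rel T) (k : int)
    (tr : seq (state T * move T)) (sf : state T) :
  symmetric e -> irreflexive e ->
  solution_path e k tr sf ->
  (* u ∈ F', added to F in state su, so d*(u) = deg (sV su) u *)
  forall (u : T) (su : state T) (tr1 tr2 : seq (state T * move T)),
    tr = tr1 ++ (su, M6 u) :: tr2 ->
  (* x_i = mv m deleted in state s (G_i, F_i), i = size D1 + 1 *)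
  forall (D1 D2 : seq (state T * move T)) (s : state T) (m : move T),
    vminus_seq tr = D1 ++ (s, m) :: D2 ->
  0 < delta e u s (next_graph sf D2) ->
  deg e (sV s) (mv m) <= deg e (sV su) u.
Proof.
move=> _ _ [_ Hch _] u su tr1 tr2 Htr D1 D2 s m Hv Hdel.
have [Pm [A [B HA]]] := filter_split Hv.
have Hu : u \in sF s by move: Hdel; rewrite /delta; case: ifP.
have Hmax : is_max e (sV su) (sF su) u.
  by move: Hch; rewrite Htr => /chain_cat /= [[_ Hm _ _] _].
have [Hx Hnx] : mv m \in sV s /\ mv m \notin sF s.
  by move: Hch; rewrite HA => /chain_cat /= [H _]; exact: (vminus_facts Pm H).
have [Hsu _] := Hmax.
move: HA; rewrite Htr => HA.
case: (split_cmp HA) => [[_ Em]|[[C H1]|[C [H1 H2]]]].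
- by rewrite -Em in Pm.
- move: Hch; rewrite Htr H1 -catA /= => /chain_cat /chain_mono [_ HF].
  case/setDP: Hsu => HsuV /negP[]; exact: HF Hu HsuV.
- move: Hch; rewrite Htr H2 => /chain_cat /chain_mono [S HF].
  apply: leq_trans (deg_mono e _ S) _; apply: Hmax.2.
  rewrite inE (subsetP S _ Hx) andbT; apply/negP => H.
  by move: Hnx; rewrite (HF _ H Hx).
Qed.
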